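(* Let $r\ge1$ and $d\ge1$ be integers. There is a bijection between partitions of $\mathbb N$ into $r$ non-empty sets, each $d$-scattered, and partitions of $\mathbb N$ into $r+1$ non-empty sets, each $(d+1)$-scattered.
   Context: A subset $A\subseteq\mathbb N$ is $d$-scattered if for all $p<q$ in $A$ we have $q-p\ge d$. *)

(* Defs.v *)
From mathcomp Require Import all_boot.
Set Implicit Arguments. Unset Strict Implicit. Unset Printing Implicit Defensive.

Definition scattered (d : nat) (A : nat -> Prop) : Prop :=
  forall p q, A p -> A q -> p < q -> d <= q - p.

Definition partition_of_nat (r : nat) (P : (nat -> Prop) -> Prop) : Prop :=
  [/\ (exists f : 'I_r -> (nat -> Prop),
         injective f /\ forall B, P B <-> exists i, B = f i),
      (forall B, P B -> exists n, B n),
      (forall n, exists B, P B /\ B n) &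
      (forall B1 B2 n, P B1 -> P B2 -> B1 n -> B2 n -> B1 = B2)].

Definition scattered_partition (r d : nat) (P : (nat -> Prop) -> Prop) : Prop :=
  partition_of_nat r P /\ forall B, P B -> scattered d B.

Definition SPart (r d : nat) := {P : (nat -> Prop) -> Prop | scattered_partition r d P}.

(* Main.v *)
Require Import Defs.
From mathcomp Require Import all_boot zify.
From Stdlib Require Import ClassicalEpsilon FunctionalExtensionality PropExtensionality ProofIrrelevance.
Set Implicit Arguments. Unset Strict Implicit. Unset Printing Implicit Defensive.

Definition plt (p : nat -> option nat) := forall n m, p n = Some m -> m < n.
Definition pinj (p : nat -> option nat) :=
  forall n1 n2 m, p n1 = Some m -> p n2 = Some m -> n1 = n2.
Definition pp (p : nat -> option nat) n := if p n is Some m then m else n.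
Definition root p n := iter n (pp p) n.

Lemma pp_le p (H : plt p) n : pp p n <= n.
Proof. rewrite /pp; case E: (p n) => [m|] //; exact: ltnW (H _ _ E). Qed.

Lemma iter_le p (H : plt p) j n : iter j (pp p) n <= n.
Proof. elim: j => [|j IH] //=; exact: leq_trans (pp_le H _) IH. Qed.

Lemma iter_fix p n j : p n = None -> iter j (pp p) n = n.
Proof. move=> E; elim: j => [|j IH] //=; by rewrite IH /pp E. Qed.

Lemma root_none p (H : plt p) : forall k n, n <= k -> p (iter k (pp p) n) = None.
Proof.
elim=> [|k IH] n hn.
  move: hn; rewrite leqn0 => /eqP -> /=.
  by case E: (p 0) => [m|] //; have := H _ _ E.
rewrite iterSr; case E: (p n) => [m|].
  rewrite {2}/pp E; apply: IH; have := H _ _ E; lia.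
by rewrite {2}/pp E iter_fix.
Qed.

Lemma root_noneR p (H : plt p) n : p (root p n) = None.
Proof. exact: root_none. Qed.

Lemma root_fix p n : p n = None -> root p n = n.
Proof. exact: iter_fix. Qed.

Lemma root_stab p (H : plt p) k n : n <= k -> iter k (pp p) n = root p n.
Proof.
elim: k n => [|k IH] n hn.
  by move: hn; rewrite leqn0 => /eqP ->.
case: (ltngtP n k.+1) hn => // [hlt _|-> _ //].
by rewrite iterS IH // /pp root_noneR.
Qed.

Lemma root_pp p (H : plt p) n : root p (pp p n) = root p n.
Proof.
rewrite -(root_stab H (pp_le H n)) -iterSr root_stab //.
Qed.

Lemma root_iter p (H : plt p) j n : root p (iter j (pp p) n) = root p n.
Proof. elim: j => [|j IH] //=; by rewrite root_pp. Qed.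

Lemma root_le p (H : plt p) n : root p n <= n.
Proof. exact: iter_le. Qed.

Lemma iter_pred p (H : plt p) j k m :
  iter j (pp p) k = m -> m <> k -> exists x, p x = Some m /\ x <= k.
Proof.
elim: j m => [|j IH] m /= h hne; first by case: hne.
case E: (p (iter j (pp p) k)) h => [m'|] h.
  by exists (iter j (pp p) k); rewrite /pp E in h; subst; split => //; apply: iter_le.
by rewrite /pp E in h; apply: IH.
Qed.

Lemma anc p (H : plt p) (Hi : pinj p) :
  forall n k, root p k = root p n -> k <= n -> exists j, iter j (pp p) n = k.
Proof.
elim/ltn_ind => n IH k hr hk.
case: (ltngtP k n) hk => // [hkn _|-> _]; last by exists 0.
case E: (p n) => [m|].
  have hmn := H _ _ E.
  have hrm : root p m = root p n by have := root_pp H n; rewrite /pp E.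
  case: (leqP k m) => hkm.
    have [j hj] := IH m hmn k (etrans hr (esym hrm)) hkm.
    by exists j.+1; rewrite iterSr /pp E.
  have [j hj] := IH k hkn m (etrans hrm (esym hr)) (ltnW hkm).
  have hne : m <> k by move=> e; rewrite e ltnn in hkm.
  have [x [hx hxk]] := iter_pred H hj hne.
  have := Hi _ _ _ hx E => exn; rewrite exn in hxk; by rewrite ltnNge hxk in hkn.
have := root_le H k; rewrite hr root_fix // => hnk.
by have := leq_ltn_trans hnk hkn; rewrite ltnn.
Qed.

Lemma iter_gap p d (H : plt p) (Hd : forall n m, p n = Some m -> m + d <= n) j n k :
  iter j (pp p) n = k -> k <> n -> k + d <= n.
Proof.
elim: j k => [|j IH] k /= h hne; first by case: hne.
case: (eqVneq (iter j (pp p) n) n) => e.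
  rewrite e in h; move: h; rewrite /pp; case E: (p n) => [m|] h; last by case: hne.
  by subst; apply: Hd.
have := IH _ erefl (elimN eqP e); have := pp_le H (iter j (pp p) n); rewrite h; lia.
Qed.

Lemma iter_below p (H : plt p) j n : 0 < j -> iter j (pp p) n <= pp p n.
Proof. case: j => // j _; rewrite iterSr; exact: iter_le. Qed.


Definition pfun (r d : nat) (p : nat -> option nat) : Prop :=
  [/\ forall n m, p n = Some m -> m < n /\ m + d <= n,
      pinj p &
      exists g : 'I_r -> nat, injective g /\ forall n, p n = None <-> exists i, n = g i].
Definition PF r d := {p | pfun r d p}.

Definition blocks p : (nat -> Prop) -> Prop :=
  fun B => exists x, p x = None /\ B = (fun n => root p n = x).

Lemma blocks_ok r d p : pfun r d p -> scattered_partition r d (blocks p).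
Proof.
case=> Hv Hi [g [gi hg]].
have H : plt p by move=> n m /Hv [].
have Hd : forall n m, p n = Some m -> m + d <= n by move=> n m /Hv [].
split; first split.
- exists (fun i => fun n => root p n = g i); split.
    move=> i j h.
    have e : (root p (g i) = g i) = (root p (g i) = g j) := f_equal (fun B => B (g i)) h.
    have : root p (g i) = g j by rewrite -e; apply: root_fix; apply/hg; exists i.
    rewrite root_fix; last by apply/hg; exists i.
    exact: gi.
  move=> B; split.
    by case=> x [/hg [i ->] ->]; exists i.
  by case=> i ->; exists (g i); split => //; apply/hg; exists i.
- by move=> B [x [hx ->]]; exists x; apply: root_fix.
- move=> n; exists (fun k => root p k = root p n); split => //.
  by exists (root p n); split => //; apply: root_noneR.
- by move=> B1 B2 n [x1 [h1 ->]] [x2 [h2 ->]] /= -> ->.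
- move=> B [x [hx ->]] a b /= ha hb hab.
  have [j hj] := anc H Hi (etrans ha (esym hb)) (ltnW hab).
  have hne : a <> b by move=> e; rewrite e ltnn in hab.
  have := iter_gap H Hd hj hne; lia.
Qed.

Definition Fmap r d (x : PF r d) : SPart r d :=
  exist _ (blocks (proj1_sig x)) (blocks_ok (proj2_sig x)).

Lemma sig_eq (A : Type) (P : A -> Prop) (x y : {a | P a}) :
  proj1_sig x = proj1_sig y -> x = y.
Proof.
case: x => a ha; case: y => b hb /= e; subst.
by rewrite (proof_irrelevance _ ha hb).
Qed.

Lemma blocks_same p (H : plt p) a b :
  (exists B, blocks p B /\ B a /\ B b) <-> root p a = root p b.
Proof.
split.
  by case=> B [[x [hx ->]] [-> ->]].
move=> e; exists (fun n => root p n = root p a); split => //.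
by exists (root p a); split => //; apply: root_noneR.
Qed.

Lemma char_some p (H : plt p) (Hi : pinj p) n m : p n = Some m ->
  [/\ m < n, root p m = root p n & forall k, m < k -> k < n -> root p k <> root p n].
Proof.
move=> E; split; first exact: H _ _ E.
  by have := root_pp H n; rewrite /pp E.
move=> k hmk hkn hr.
have [j hj] := anc H Hi hr (ltnW hkn).
case: j hj => [|j] hj; first by rewrite /= in hj; subst; rewrite ltnn in hkn.
have := iter_below H n (ltn0Sn j); rewrite hj /pp E => hkm.
by have := leq_ltn_trans hkm hmk; rewrite ltnn.
Qed.

Lemma char_none p (H : plt p) (Hi : pinj p) n : p n = None ->
  forall k, k < n -> root p k <> root p n.
Proof.
move=> E k hkn hr.
have [j hj] := anc H Hi hr (ltnW hkn).
rewrite iter_fix // in hj; subst; by rewrite ltnn in hkn.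
Qed.

Lemma Fmap_inj r d : injective (@Fmap r d).
Proof.
move=> [p1 hp1] [p2 hp2] e; apply: sig_eq => /=.
have eb : blocks p1 = blocks p2 by have := f_equal (@proj1_sig _ _) e.
case: (hp1) => Hv1 Hi1 _; case: (hp2) => Hv2 Hi2 _.
have H1 : plt p1 by move=> n m /Hv1 [].
have H2 : plt p2 by move=> n m /Hv2 [].
have eq12 : forall a b, root p1 a = root p1 b <-> root p2 a = root p2 b.
  move=> a b; rewrite -(blocks_same H1) -(blocks_same H2) eb; done.
apply: functional_extensionality => n.
case E1: (p1 n) => [m1|]; case E2: (p2 n) => [m2|] //.
- have [l1 r1 c1] := char_some H1 Hi1 E1.
  have [l2 r2 c2] := char_some H2 Hi2 E2.
  case: (ltngtP m1 m2) => h //; last by rewrite h.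
    by case: (c1 m2 h l2); apply/eq12.
  by case: (c2 m1 h l1); apply/eq12.
- have [l1 r1 c1] := char_some H1 Hi1 E1.
  by case: (char_none H2 Hi2 E2 l1); apply/eq12.
- have [l2 r2 c2] := char_some H2 Hi2 E2.
  by case: (char_none H1 Hi1 E1 l2); apply/eq12.
Qed.

Definition cb (P : Prop) : bool := if excluded_middle_informative P then true else false.
Lemma cbP P : reflect P (cb P).
Proof. rewrite /cb; case: excluded_middle_informative => h; by constructor. Qed.

Fixpoint lastb (f : nat -> bool) k :=
  if k is k'.+1 then (if f k' then Some k' else lastb f k') else None.

Lemma lastb_some f k m : lastb f k = Some m ->
  [/\ m < k, f m & forall j, m < j -> j < k -> f j = false].
Proof.
elim: k => [|k IH] //=; case E: (f k) => h.
  case: h => <-; split => // j h1 h2; lia.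
have [a b c] := IH h; split => //; first by apply: ltnW.
move=> j h1 h2; have [->|hl] : j = k \/ j < k by lia.
  by []. exact: c.
Qed.

Lemma lastb_none f k : lastb f k = None -> forall j, j < k -> f j = false.
Proof.
elim: k => [|k IH] //=; case E: (f k) => // h j hj.
have [->|hl] : j = k \/ j < k by lia.
  by []. exact: IH.
Qed.

Lemma ex_min (B : nat -> Prop) : (exists n, B n) -> exists m, B m /\ forall k, B k -> m <= k.
Proof.
move=> [n hn].
have ex : exists n, cb (B n) by exists n; apply/cbP.
case: (ex_minnP ex) => m /cbP hm hmin; exists m; split => // k /cbP; exact: hmin.
Qed.

Lemma Fmap_surj r d (s : SPart r d) : exists x, Fmap x = s.
Proof.
case: s => P HP.
case: (HP) => [[[f [finj fch]] Hne Hcov Hdis] Hsc].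
pose sameP a b := exists B, P B /\ B a /\ B b.
have s_refl : forall a, sameP a a by move=> a; have [B [hB hBa]] := Hcov a; exists B.
have s_sym : forall a b, sameP a b -> sameP b a by move=> a b [B [? [? ?]]]; exists B.
have s_trans : forall a b c, sameP a b -> sameP b c -> sameP a c.
  move=> a b c [B1 [h1 [h1a h1b]]] [B2 [h2 [h2b h2c]]]; exists B1; split => //; split => //.
  by rewrite (Hdis B1 B2 b).
pose p n := lastb (fun m => cb (sameP m n)) n.
have p_some : forall n m, p n = Some m ->
   [/\ m < n, sameP m n & forall j, m < j -> j < n -> ~ sameP j n].
  move=> n m /lastb_some [a /cbP b c]; split => // j h1 h2 /cbP; by rewrite c.
have p_none : forall n, p n = None -> forall j, j < n -> ~ sameP j n.
  by move=> n /lastb_none h j hj /cbP; rewrite h.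
have H : plt p by move=> n m /p_some [].
have root_same : forall n, sameP n (root p n).
  move=> n; rewrite /root; suff gen : forall j, sameP n (iter j (pp p) n) by [].
  elim=> [|j IH] /=; first exact: s_refl.
  have e : pp p (iter j (pp p) n) = if p (iter j (pp p) n) is Some m then m else iter j (pp p) n by [].
  rewrite e; case E: (p (iter j (pp p) n)) => [m|] //.
  have [_ hs _] := p_some _ _ E; exact: (s_trans _ _ _ IH (s_sym _ _ hs)).
have roots : forall a b, root p a = root p b <-> sameP a b.
  move=> a b; split.
    move=> e; apply: (s_trans _ _ _ (root_same a)); rewrite e; apply s_sym; exact: root_same.
  move=> hab.
  have hx : sameP (root p a) (root p b).
    exact: (s_trans _ _ _ (s_sym _ _ (root_same a)) (s_trans _ _ _ hab (root_same b))).
  case: (ltngtP (root p a) (root p b)) => // h.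
    by case: (p_none _ (root_noneR H b) _ h).
  by case: (p_none _ (root_noneR H a) _ h); apply s_sym.
have hpf : pfun r d p.
  split.
  - move=> n m /p_some [hmn [B [hB [hBm hBn]]] _]; split => //.
    have := Hsc B hB m n hBm hBn hmn; lia.
  - move=> n1 n2 m E1 E2.
    have [l1 s1 c1] := p_some _ _ E1; have [l2 s2 c2] := p_some _ _ E2.
    case: (ltngtP n1 n2) => // h.
      by case: (c2 n1 l1 h); exact: (s_trans _ _ _ (s_sym _ _ s1) s2).
    by case: (c1 n2 l2 h); exact: (s_trans _ _ _ (s_sym _ _ s2) s1).
  - have hmin : forall i, exists m, f i m /\ forall k, f i k -> m <= k.
      move=> i; apply: ex_min; apply: Hne; apply/fch; by exists i.
    pose g i := proj1_sig (constructive_indefinite_description _ (hmin i)).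
    have hg : forall i, f i (g i) /\ forall k, f i k -> g i <= k.
      move=> i; exact: proj2_sig (constructive_indefinite_description _ (hmin i)).
    have Pf : forall i, P (f i) by move=> i; apply/fch; exists i.
    exists g; split.
      move=> i j e; apply: finj; apply: (Hdis _ _ (g i) (Pf i) (Pf j)).
        exact: (hg i).1.
      rewrite e; exact: (hg j).1.
    move=> n; split.
      move=> hn; have [B [hB hBn]] := Hcov n; have [i ei] := (fch B).1 hB; subst B.
      exists i; have := (hg i).2 n hBn; rewrite leq_eqVlt => /orP [/eqP -> //|hlt].
      by case: (p_none _ hn _ hlt); exists (f i); split => //; split => //; exact: (hg i).1.
    move=> [i ->]; case E: (p (g i)) => [m|] //.
    have [l [B [hB [hBm hBg]]] _] := p_some _ _ E.
    have eB : B = f i by apply: (Hdis _ _ (g i) hB (Pf i)) => //; exact: (hg i).1.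
    subst B; have := (hg i).2 m hBm; by rewrite leqNgt l.
exists (exist _ p hpf); apply: sig_eq => /=.
apply: functional_extensionality => B; apply: propositional_extensionality; split.
  case=> x [hx ->].
  have [B0 [hB0 hB0x]] := Hcov x.
  suff -> : (fun n => root p n = x) = B0 by [].
  apply: functional_extensionality => k; apply: propositional_extensionality; split.
    move=> e; have : sameP k x by apply/roots; rewrite e root_fix.
    case=> B1 [hB1 [hk hx1]]; by rewrite -(Hdis _ _ x hB1 hB0).
  move=> hk; rewrite -(root_fix hx); apply/roots; by exists B0.
move=> hB; have [n hn] := Hne B hB.
exists (root p n); split; first exact: root_noneR.
apply: functional_extensionality => k; apply: propositional_extensionality; split.
  by move=> hk; apply/roots; exists B.
move=> /roots [B1 [hB1 [hk hn1]]]; by rewrite (Hdis _ _ n hB hB1).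
Qed.

Lemma inj_surj_bij (A B : Type) (f : A -> B) :
  injective f -> (forall b, exists a, f a = b) -> bijective f.
Proof.
move=> hi hs.
exists (fun b => proj1_sig (constructive_indefinite_description _ (hs b))).
  move=> a; apply: hi; exact: proj2_sig (constructive_indefinite_description _ (hs (f a))).
move=> b; exact: proj2_sig (constructive_indefinite_description _ (hs b)).
Qed.

Definition sh (p : nat -> option nat) n := if n is n'.+1 then p n' else None.

Lemma sh_ok r d p : pfun r d p -> pfun r.+1 d.+1 (sh p).
Proof.
case=> Hv Hi [g [gi hg]]; split.
- by case=> [|n] m //= /Hv [h1 h2]; split; lia.
- by case=> [|n1] [|n2] m //= E1 E2; rewrite (Hi _ _ _ E1 E2).
- exists (fun i : 'I_r.+1 => if unlift ord0 i is Some j then (g j).+1 else 0); split.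
    move=> i j; case: (unliftP ord0 i) => [i'|] ei; case: (unliftP ord0 j) => [j'|] ej; subst => //.
    by case=> /gi ->.
  case=> [|n] /=.
    by split => // _; exists ord0; rewrite unlift_none.
  rewrite hg; split.
    by case=> i ->; exists (lift ord0 i); rewrite liftK.
  case=> i; case: (unliftP ord0 i) => [j|] ei; subst => //; case=> ->; by exists j.
Qed.

Lemma unsh_ok r d q (hd : 0 < d) : pfun r.+1 d.+1 q -> pfun r d (fun n => q n.+1).
Proof.
case=> Hv Hi [g [gi hg]]; split.
- by move=> n m /Hv [h1 h2]; split; lia.
- by move=> n1 n2 m E1 E2; have := Hi _ _ _ E1 E2; case.
- have q0 : q 0 = None by case E: (q 0) => [m|] //; have [] := Hv _ _ E.
  have [i0 ei0] := (hg 0).1 q0.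
  have nz : forall j, g (lift i0 j) <> 0.
    move=> l e0; have h := gi _ _ (etrans e0 ei0); have := neq_lift i0 l; by rewrite h eqxx.
  exists (fun j => (g (lift i0 j)).-1); split.
    move=> j k e.
    have e' : g (lift i0 j) = g (lift i0 k).
      have := nz j; have := nz k; move: e; lia.
    exact: lift_inj (gi _ _ e').
  move=> n; split.
    move=> /hg [i ei]; case: (unliftP i0 i) => [j|] eij; subst.
      by exists j; rewrite -ei.
    by rewrite -ei0 in ei.
  case=> j ->; apply/hg; exists (lift i0 j).
  have := nz j; lia.
Qed.

Definition SH r d (x : PF r d) : PF r.+1 d.+1 :=
  exist _ (sh (proj1_sig x)) (sh_ok (proj2_sig x)).

Lemma SH_bij r d (hd : 0 < d) : bijective (@SH r d).
Proof.
apply: inj_surj_bij.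
  move=> [p1 h1] [p2 h2] e; apply: sig_eq => /=.
  have e' : sh p1 = sh p2 by have := f_equal (@proj1_sig _ _) e.
  apply: functional_extensionality => n; exact: (f_equal (fun f => f n.+1) e').
move=> [q hq]; exists (exist _ _ (unsh_ok hd hq)); apply: sig_eq => /=.
apply: functional_extensionality; case=> [|n] //=.
case: hq => Hv _ _; case E: (q 0) => [m|] //; by have [] := Hv _ _ E.
Qed.

Theorem theorem4p1 (r d : nat) (hr : 1 <= r) (hd : 1 <= d) :
  exists f : SPart r d -> SPart r.+1 d.+1, bijective f.
Proof.
have b1 : bijective (@Fmap r d) by apply: inj_surj_bij; [exact: Fmap_inj | exact: Fmap_surj].
have b2 : bijective (@Fmap r.+1 d.+1) by apply: inj_surj_bij; [exact: Fmap_inj | exact: Fmap_surj].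
case: b1 => g1 c1 c2.
exists (@Fmap r.+1 d.+1 \o @SH r d \o g1).
apply: bij_comp; last by exists (@Fmap r d).
apply: bij_comp; first exact: b2.
exact: SH_bij.
Qed.
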